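(* Let $k<n<m<\phi(k)$. Then the value in $U_q^+(\mathfrak{so}_{2n})$ of the bracketed word $[y_k\,x_{n+1}\,x_{n+2}\cdots x_m]$, where $y_k=e[k,n]$, does not depend on the arrangement of the (skew) brackets on the sequence $y_k,x_{n+1},\dots,x_m$.
   Context: Let $\mathbf{k}$ be a field, $G$ an abelian group, $n\ge3$, $X=\{x_1,\dots,x_n\}$, $g_i\in G$, characters $\chi^i:G\to\mathbf{k}^*$, $p_{ij}=\chi^i(g_j)$; for homogeneous $u,v$, $p(u,v)=\chi^u(g_v)$ (replace $x_i$ by $g_i$, resp. $\chi^i$). $G\langle X\rangle$: skew group algebra with $x_ig=\chi^i(g)gx_i$; skew bracket $[u,v]=uv-p(u,v)vu$. Fix $q\in\mathbf{k}^*$, $q\ne-1$; assume $p_{ii}=q$ ($1\le i\le n$), $p_{i,i-1}p_{i-1,i}=q^{-1}$ ($1<i<n$), $p_{n-2,n}p_{n,n-2}=q^{-1}$, $p_{n-1,n}p_{n,n-1}=1$, $p_{ij}p_{ji}=1$ for all other $i<j$ with $j>i+1$. $U_q^+(\mathfrak{so}_{2n})$ is the quotient of $G\langle X\rangle$ by the ideal generated by $[x_i,[x_i,x_{i+1}]]$, $[[x_i,x_{i+1}],x_{i+1}]$ ($1\le i\le n-2$), $[x_{n-2},[x_{n-2},x_n]]$, $[[x_{n-2},x_n],x_n]$, $[x_i,x_j]$ ($1\le i<j\le n-1$, $j>i+1$), $[x_i,x_n]$ ($i\le n-3$), $[x_{n-1},x_n]$. For $n<i<2n$, $x_i:=x_{2n-i}$;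 $\phi(i)=2n-i$. For $k<n$, $e[k,n]$ is the left-normed bracketing $[[\dots[y_1,y_2],\dots],y_r]$ of the letters of the word $e(k,n)$, where $e(k,n)=x_kx_{k+1}\cdots x_{n-2}x_n$ (and $e(n-1,n)=x_n$, unbracketed). *)

(* Defs.v *)
From HB Require Import structures.
From mathcomp Require Import all_boot all_order all_algebra.
Set Implicit Arguments. Unset Strict Implicit. Unset Printing Implicit Defensive.
Import GRing.Theory.
Local Open Scope ring_scope.

(* Free algebra k<X> on letters x_1..x_n : a polynomial is a function from
   words (seq nat, letter a stands for x_a) to coefficients; we only ever
   build finitely supported ones. *)
Definition word := seq nat.

Section NC.
Variable K : fieldType.
Definition ncpoly := word -> K.
Definition nc0 : ncpoly := fun _ => 0.
Definition ncadd (f h : ncpoly) : ncpoly := fun w => f w + h w.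
Definition ncscale (c : K) (f : ncpoly) : ncpoly := fun w => c * f w.
Definition ncsub (f h : ncpoly) : ncpoly := ncadd f (ncscale (-1) h).
Definition ncmul (f h : ncpoly) : ncpoly :=
  fun w => \sum_(i < (size w).+1) f (take i w) * h (drop i w).
Definition ncmono (u : word) : ncpoly := fun w => (w == u)%:R.
End NC.

Section Skew.
Variables (K : fieldType) (G : zmodType) (g : nat -> G) (chi : nat -> G -> K).

(* p(u,v) = chi^u(g_v) for words u, v (G written additively) *)
Definition pw (u v : word) : K := \prod_(a <- u) chi a (\sum_(b <- v) g b).

(* homogeneous element together with its degree (word of its letters) *)
Definition hitem := (ncpoly K * word)%type.
Definition xitem (a : nat) : hitem := (ncmono K [:: a], [:: a]).

Definition sbr (x y : hitem) : hitem :=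
  (ncsub (ncmul x.1 y.1) (ncscale (pw x.2 y.2) (ncmul y.1 x.1)), x.2 ++ y.2).

Definition lnb (s : seq hitem) : hitem :=
  match s with [::] => (nc0 K, [::]) | y :: ys => foldl sbr y ys end.

(* x_j for n < j < 2n is x_(2n-j) *)
Definition xlet (n j : nat) : nat := if (j <= n)%N then j else (n.*2 - j)%N.

(* e(k,n) = x_k x_(k+1) ... x_(n-2) x_n, and e[k,n] its left-normed bracketing *)
Definition e_word (k n : nat) : word := rcons (iota k (n.-1 - k)) n.
Definition e_br (k n : nat) : hitem := lnb (map xitem (e_word k n)).

(* arrangements of brackets on a sequence: binary trees whose leaves,
   read left to right, are the positions 0..r-1 *)
Inductive btree := BLeaf of nat | BNode of btree & btree.
Fixpoint frontier (t : btree) : seq nat :=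
  match t with BLeaf i => [:: i] | BNode l r => frontier l ++ frontier r end.
Fixpoint beval (s : seq hitem) (t : btree) : hitem :=
  match t with
  | BLeaf i => nth (nc0 K, [::]) s i
  | BNode l r => sbr (beval s l) (beval s r)
  end.

Definition is_relator (n : nat) (r : ncpoly K) : Prop :=
  (exists i, (1 <= i <= n - 2)%N /\
     (r = (sbr (xitem i) (sbr (xitem i) (xitem i.+1))).1 \/
      r = (sbr (sbr (xitem i) (xitem i.+1)) (xitem i.+1)).1))
  \/ r = (sbr (xitem (n - 2)) (sbr (xitem (n - 2)) (xitem n))).1
  \/ r = (sbr (sbr (xitem (n - 2)) (xitem n)) (xitem n)).1
  \/ (exists i j, (1 <= i)%N /\ (i < j <= n - 1)%N /\ (i.+1 < j)%N /\
        r = (sbr (xitem i) (xitem j)).1)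
  \/ (exists i, (1 <= i <= n - 3)%N /\ r = (sbr (xitem i) (xitem n)).1)
  \/ r = (sbr (xitem (n - 1)) (xitem n)).1.

Definition wordX (n : nat) (u : word) : bool := all (fun a => (0 < a <= n)%N) u.

(* f lies in the two-sided ideal of k<x_1..x_n> generated by the relators:
   f = sum_j c_j u_j r_j v_j with words u_j, v_j and relators r_j *)
Definition in_ideal (n : nat) (f : ncpoly K) : Prop :=
  exists s : seq (K * word * ncpoly K * word),
    foldr (fun t P => [/\ is_relator n t.1.2, wordX n t.1.1.2 & wordX n t.2] /\ P)
      True s /\
    forall w, f w = \sum_(t <- s)
      ncmul (ncmul (ncscale t.1.1.1 (ncmono K t.1.1.2)) t.1.2) (ncmono K t.2) w.

Definition eq_Uq (n : nat) (f h : ncpoly K) : Prop := in_ideal n (ncsub f h).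
End Skew.

(* Main.v *)
Require Import Defs.
From HB Require Import structures.
From mathcomp Require Import all_boot all_order all_algebra.
From mathcomp Require Import ring zify.
From Stdlib Require Import FunctionalExtensionality.
Set Implicit Arguments. Unset Strict Implicit. Unset Printing Implicit Defensive.
Import GRing.Theory.
Local Open Scope ring_scope.

Section L1.
Variable K : fieldType.
Implicit Types f h u : ncpoly K.

Lemma ncmul_nil f h : ncmul f h [::] = f [::] * h [::].
Proof. by rewrite /ncmul big_ord_recl big_ord0 addr0. Qed.

Lemma ncmul_cons f h a w :
  ncmul f h (a :: w) = f [::] * h (a :: w) + ncmul (fun v => f (a :: v)) h w.
Proof. by rewrite /ncmul big_ord_recl /=. Qed.

Lemma ncmulDl f1 f2 h w : ncmul (ncadd f1 f2) h w = ncmul f1 h w + ncmul f2 h w.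
Proof. by rewrite /ncmul -big_split /=; apply: eq_bigr => i _; rewrite /ncadd mulrDl. Qed.
Lemma ncmulDr f h1 h2 w : ncmul f (ncadd h1 h2) w = ncmul f h1 w + ncmul f h2 w.
Proof. by rewrite /ncmul -big_split /=; apply: eq_bigr => i _; rewrite /ncadd mulrDr. Qed.
Lemma ncmulZl c f h w : ncmul (ncscale c f) h w = c * ncmul f h w.
Proof. by rewrite /ncmul big_distrr /=; apply: eq_bigr => i _; rewrite /ncscale mulrA. Qed.
Lemma ncmulZr c f h w : ncmul f (ncscale c h) w = c * ncmul f h w.
Proof. by rewrite /ncmul big_distrr /=; apply: eq_bigr => i _; rewrite /ncscale mulrCA. Qed.
Lemma ncmul_ext f f' h h' : (forall w, f w = f' w) -> (forall w, h w = h' w) ->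
  forall w, ncmul f h w = ncmul f' h' w.
Proof. by move=> E1 E2 w; rewrite /ncmul; apply: eq_bigr => i _; rewrite E1 E2. Qed.

Lemma ncmulA_pt w : forall f g h, ncmul (ncmul f g) h w = ncmul f (ncmul g h) w.
Proof.
elim: w => [|a w IH] f g h.
  by rewrite !ncmul_nil mulrA.
rewrite !ncmul_cons !ncmul_nil.
have E : forall v, ncmul f g (a :: v) = ncadd (ncscale (f [::]) (fun v => g (a :: v)))
            (ncmul (fun v => f (a :: v)) g) v.
  by move=> v; rewrite ncmul_cons /ncadd /ncscale.
rewrite (ncmul_ext E (fun _ => erefl)) ncmulDl ncmulZl IH.
ring.
Qed.
End L1.


Section L2.
Variable K : fieldType.
Implicit Types f h : ncpoly K.

Lemma ncmulA f g h : ncmul (ncmul f g) h = ncmul f (ncmul g h).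
Proof. by apply: functional_extensionality => w; apply: ncmulA_pt. Qed.
Lemma ncmulDlF f1 f2 h : ncmul (ncadd f1 f2) h = ncadd (ncmul f1 h) (ncmul f2 h).
Proof. by apply: functional_extensionality => w; rewrite ncmulDl. Qed.
Lemma ncmulDrF f h1 h2 : ncmul f (ncadd h1 h2) = ncadd (ncmul f h1) (ncmul f h2).
Proof. by apply: functional_extensionality => w; rewrite ncmulDr. Qed.
Lemma ncmulZlF c f h : ncmul (ncscale c f) h = ncscale c (ncmul f h).
Proof. by apply: functional_extensionality => w; rewrite ncmulZl. Qed.
Lemma ncmulZrF c f h : ncmul f (ncscale c h) = ncscale c (ncmul f h).
Proof. by apply: functional_extensionality => w; rewrite ncmulZr. Qed.

Lemma ncmul_mono_l u h w :
  ncmul (ncmono K u) h w = (take (size u) w == u)%:R * h (drop (size u) w).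
Proof.
elim: u w h => [|b u IH] w h.
  case: w => [|a w]; first by rewrite ncmul_nil /ncmono /= mul1r.
  rewrite ncmul_cons /ncmono /= mul1r.
  rewrite /ncmul big1 ?addr0 // => i _; by rewrite mul0r.
case: w => [|a w]; first by rewrite ncmul_nil /ncmono /= !mul0r.
rewrite ncmul_cons /ncmono /= mul0r add0r.
have E : forall v, ((a :: v) == (b :: u))%:R = ncscale ((a == b)%:R) (ncmono K u) v :> K.
  by move=> v; rewrite /ncscale /ncmono eqseq_cons -mulnb natrM.
rewrite (ncmul_ext E (fun _ => erefl)) ncmulZl IH eqseq_cons -mulnb natrM mulrA.
by [].
Qed.

Lemma mono_mul u v : ncmul (ncmono K u) (ncmono K v) = ncmono K (u ++ v).
Proof.
apply: functional_extensionality => w; rewrite ncmul_mono_l /ncmono -natrM.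
congr (_%:R); rewrite mulnb.
case E: (w == u ++ v).
  by move/eqP: E => ->; rewrite take_size_cat // drop_size_cat // !eqxx.
case E': ((take (size u) w == u) && (drop (size u) w == v)) => //.
move/andP: E' => [/eqP E1 /eqP E2].
by move: E; rewrite -(cat_take_drop (size u) w) E1 E2 eqxx.
Qed.

Lemma mono_nil_l h : ncmul (ncmono K [::]) h = h.
Proof. by apply: functional_extensionality => w; rewrite ncmul_mono_l take0 drop0 eqxx mul1r. Qed.

Lemma mono_nil_r h : ncmul h (ncmono K [::]) = h.
Proof.
apply: functional_extensionality => w; rewrite /ncmul big_ord_recr /= take_size drop_size.
rewrite /ncmono eqxx mulr1 big1 ?add0r // => i _.
have Hi : (i < size w)%N by [].
case: (drop i w =P [::]) => [E|_]; last by rewrite mulr0.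
by move: (size_drop i w); rewrite E /= => /esym/eqP; rewrite subn_eq0 leqNgt Hi.
Qed.
End L2.


Section L3.
Variables (K : fieldType) (G : zmodType) (g : nat -> G) (chi : nat -> G -> K) (n : nat).
Implicit Types f h : ncpoly K.

Lemma ncmul_zl f h w : (forall v, f v = 0) -> ncmul f h w = 0.
Proof. by move=> E; rewrite /ncmul big1 // => i _; rewrite E mul0r. Qed.
Lemma ncmul_zr f h w : (forall v, h v = 0) -> ncmul f h w = 0.
Proof. by move=> E; rewrite /ncmul big1 // => i _; rewrite E mulr0. Qed.

Lemma ncmul_sumr (T : Type) (s : seq T) (F : T -> ncpoly K) f w :
  ncmul f (fun v => \sum_(t <- s) F t v) w = \sum_(t <- s) ncmul f (F t) w.
Proof.
elim: s w => [|t s IH] w.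
  by rewrite big_nil ncmul_zr // => v; rewrite big_nil.
rewrite big_cons -IH -ncmulDr; apply: ncmul_ext => // v.
by rewrite big_cons.
Qed.
Lemma ncmul_suml (T : Type) (s : seq T) (F : T -> ncpoly K) f w :
  ncmul (fun v => \sum_(t <- s) F t v) f w = \sum_(t <- s) ncmul (F t) f w.
Proof.
elim: s w => [|t s IH] w.
  by rewrite big_nil ncmul_zl // => v; rewrite big_nil.
rewrite big_cons -IH -ncmulDl; apply: ncmul_ext => // v.
by rewrite big_cons.
Qed.

Definition I f := in_ideal g chi n f.
Definition gterm (t : K * word * ncpoly K * word) : ncpoly K :=
  ncmul (ncmul (ncscale t.1.1.1 (ncmono K t.1.1.2)) t.1.2) (ncmono K t.2).
Definition goodl (s : seq (K * word * ncpoly K * word)) :=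
  foldr (fun t P => [/\ is_relator g chi n t.1.2, wordX n t.1.1.2 & wordX n t.2] /\ P) True s.

Lemma goodl_cat s1 s2 : goodl s1 -> goodl s2 -> goodl (s1 ++ s2).
Proof. by elim: s1 => [|t s1 IH] //= [H1 H2] H3; split => //; apply: IH. Qed.

Lemma I_ext f h : (forall w, f w = h w) -> I f -> I h.
Proof. move=> E [s [Hs Hf]]; exists s; split => // w; by rewrite -E. Qed.

Lemma I_zero f : (forall w, f w = 0) -> I f.
Proof. by move=> E; exists [::]; split => // w; rewrite big_nil E. Qed.

Lemma I_add f h : I f -> I h -> I (ncadd f h).
Proof.
move=> [s1 [H1 E1]] [s2 [H2 E2]]; exists (s1 ++ s2); split; first exact: goodl_cat.
by move=> w; rewrite big_cat /ncadd E1 E2.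
Qed.

Lemma I_scale c f : I f -> I (ncscale c f).
Proof.
move=> [s [H E]]; exists (map (fun t => (c * t.1.1.1, t.1.1.2, t.1.2, t.2)) s); split.
  by elim: s H {E} => [|t s IH] //= [H1 H2]; split => //; apply: IH.
move=> w; rewrite big_map /ncscale E big_distrr /=; apply: eq_bigr => t _.
have -> : (fun w0 => c * t.1.1.1 * ncmono K t.1.1.2 w0) = ncscale c (ncscale t.1.1.1 (ncmono K t.1.1.2)).
  by apply: functional_extensionality => v; rewrite /ncscale mulrA.
by rewrite !ncmulZlF.
Qed.

Lemma I_sub f h : I f -> I h -> I (ncsub f h).
Proof. by move=> Hf Hh; apply: I_add => //; apply: I_scale. Qed.

Lemma I_rel r : is_relator g chi n r -> I r.
Proof.
move=> Hr; exists [:: (1, [::], r, [::])]; split => //.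
move=> w; rewrite big_cons big_nil addr0 /gterm /=.
have -> : ncscale 1 (ncmono K [::]) = ncmono K [::].
  by apply: functional_extensionality => v; rewrite /ncscale mul1r.
by rewrite mono_nil_l mono_nil_r.
Qed.

Lemma I_mull u f : wordX n u -> I f -> I (ncmul (ncmono K u) f).
Proof.
move=> Hu [s [H E]]; exists (map (fun t => (t.1.1.1, u ++ t.1.1.2, t.1.2, t.2)) s); split.
  elim: s H {E} => [|t s IH] //= [[H1 H2 H3] H4]; split; last by apply: IH.
  by split => //; rewrite /wordX all_cat; apply/andP.
move=> w; rewrite (ncmul_ext (f' := ncmono K u) (h' := fun v => \sum_(t <- s) gterm t v)) //.
rewrite ncmul_sumr big_map; apply: eq_bigr => t _.
by rewrite /gterm /= -!ncmulA ncmulZrF mono_mul ncmulZlF.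
Qed.

Lemma I_mulr v f : wordX n v -> I f -> I (ncmul f (ncmono K v)).
Proof.
move=> Hv [s [H E]]; exists (map (fun t => (t.1.1.1, t.1.1.2, t.1.2, t.2 ++ v)) s); split.
  elim: s H {E} => [|t s IH] //= [[H1 H2 H3] H4]; split; last by apply: IH.
  by split => //; rewrite /wordX all_cat; apply/andP.
move=> w; rewrite (ncmul_ext (f' := fun v => \sum_(t <- s) gterm t v) (h' := ncmono K v)) //.
rewrite ncmul_suml big_map; apply: eq_bigr => t _.
by rewrite /gterm /= ncmulA mono_mul.
Qed.

Definition gen f := exists l : seq (K * word),
  all (fun t => wordX n t.2) l /\ forall w, f w = \sum_(t <- l) t.1 * ncmono K t.2 w.

Lemma gen_ext f h : (forall w, f w = h w) -> gen f -> gen h.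
Proof. move=> E [l [Hl Hf]]; exists l; split => // w; by rewrite -E. Qed.

Lemma I_mulgl a f : gen a -> I f -> I (ncmul a f).
Proof.
move=> [l [Hl Ea]] Hf.
apply: (I_ext (f := fun w => \sum_(t <- l) ncmul (ncscale t.1 (ncmono K t.2)) f w)).
  by move=> w; rewrite -ncmul_suml; apply: ncmul_ext.
elim: l Hl {Ea} => [|t l IH] /= Hl.
  by apply: I_zero => w; rewrite big_nil.
move/andP: Hl => [Ht Hl].
apply: (I_ext (f := ncadd (ncscale t.1 (ncmul (ncmono K t.2) f))
   (fun w => \sum_(t <- l) ncmul (ncscale t.1 (ncmono K t.2)) f w))).
  by move=> w; rewrite big_cons /ncadd ncmulZl.
by apply: I_add; [apply: I_scale; apply: I_mull | apply: IH].
Qed.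

Lemma I_mulgr a f : gen a -> I f -> I (ncmul f a).
Proof.
move=> [l [Hl Ea]] Hf.
apply: (I_ext (f := fun w => \sum_(t <- l) ncmul f (ncscale t.1 (ncmono K t.2)) w)).
  by move=> w; rewrite -ncmul_sumr; apply: ncmul_ext.
elim: l Hl {Ea} => [|t l IH] /= Hl.
  by apply: I_zero => w; rewrite big_nil.
move/andP: Hl => [Ht Hl].
apply: (I_ext (f := ncadd (ncscale t.1 (ncmul f (ncmono K t.2)))
   (fun w => \sum_(t <- l) ncmul f (ncscale t.1 (ncmono K t.2)) w))).
  by move=> w; rewrite big_cons /ncadd ncmulZr.
by apply: I_add; [apply: I_scale; apply: I_mulr | apply: IH].
Qed.

Lemma gen_mono u : wordX n u -> gen (ncmono K u).
Proof. by move=> Hu; exists [:: (1, u)]; split; [rewrite /= Hu | move=> w; rewrite big_seq1 mul1r]. Qed.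

Lemma gen_add f h : gen f -> gen h -> gen (ncadd f h).
Proof.
move=> [l1 [H1 E1]] [l2 [H2 E2]]; exists (l1 ++ l2); split.
  by rewrite all_cat H1 H2.
by move=> w; rewrite big_cat /ncadd E1 E2.
Qed.

Lemma gen_scale c f : gen f -> gen (ncscale c f).
Proof.
move=> [l [H E]]; exists (map (fun t => (c * t.1, t.2)) l); split.
  by rewrite all_map.
move=> w; rewrite big_map /ncscale E big_distrr; apply: eq_bigr => t _ /=; by rewrite mulrA.
Qed.

Lemma gen_sub f h : gen f -> gen h -> gen (ncsub f h).
Proof. by move=> Hf Hh; apply: gen_add => //; apply: gen_scale. Qed.

Lemma gen_mul f h : gen f -> gen h -> gen (ncmul f h).
Proof.
move=> [l1 [H1 E1]] Hh.
apply: (gen_ext (f := fun w => \sum_(t <- l1) ncmul (ncscale t.1 (ncmono K t.2)) h w)).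
  by move=> w; rewrite -ncmul_suml; apply: ncmul_ext.
elim: l1 H1 {E1} => [|t l IH] /= Hl.
  by exists [::]; split => // w; rewrite !big_nil.
move/andP: Hl => [Ht Hl].
apply: (gen_ext (f := ncadd (ncscale t.1 (ncmul (ncmono K t.2) h))
   (fun w => \sum_(t <- l) ncmul (ncscale t.1 (ncmono K t.2)) h w))).
  by move=> w; rewrite big_cons /ncadd ncmulZl.
apply: gen_add; last by apply: IH.
apply: gen_scale.
case: Hh => [l2 [H2 E2]].
exists (map (fun s => (s.1, t.2 ++ s.2)) l2); split.
  rewrite all_map; apply/allP => s Hs /=; rewrite /wordX all_cat; apply/andP; split; [exact: Ht | exact: (allP H2 s Hs)].
move=> w; rewrite (ncmul_ext (f' := ncmono K t.2) (h' := fun w => \sum_(t <- l2) t.1 * ncmono K t.2 w)) //.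
rewrite ncmul_sumr big_map; apply: eq_bigr => s _.
have -> : (fun w => s.1 * ncmono K s.2 w) = ncscale s.1 (ncmono K s.2) by [].
by rewrite ncmulZr mono_mul.
Qed.
End L3.


Ltac nc_norm :=
  rewrite /sbr /= /ncsub ?(ncmulDlF, ncmulDrF, ncmulZlF, ncmulZrF, ncmulA);
  apply: functional_extensionality => ?; rewrite /ncadd /ncscale; ring.

Section L4.
Variables (K : fieldType) (G : zmodType) (g : nat -> G) (chi : nat -> G -> K) (n : nat).
Hypothesis Hchi : forall i, (1 <= i <= n)%N -> forall a b : G, chi i (a + b) = chi i a * chi i b.

Notation pw := (pw g chi).
Notation sbr := (sbr g chi).
Notation I := (I g chi n).
Notation gen := (@gen K n).

Lemma pw_catl u v w : pw (u ++ v) w = pw u w * pw v w.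
Proof. by rewrite /pw big_cat. Qed.
Lemma pw_catr u v w : wordX n u -> pw u (v ++ w) = pw u v * pw u w.
Proof.
elim: u => [|a u IH] /=; first by rewrite /pw !big_nil mulr1.
move=> /andP [Ha Hu]; rewrite /pw !big_cons -/(pw u _) IH // big_cat Hchi //.
by rewrite !mulrA; congr (_ * _); rewrite -!mulrA; congr (_ * _); rewrite mulrC.
Qed.

Definition Good (x : hitem K) := gen x.1 /\ wordX n x.2.
Lemma Good_sbr x y : Good x -> Good y -> Good (sbr x y).
Proof.
move=> [H1 H2] [H3 H4]; split; last by rewrite /wordX all_cat; apply/andP.
by apply: gen_sub; [|apply: gen_scale]; apply: gen_mul.
Qed.
Lemma Good_x a : (1 <= a <= n)%N -> Good (xitem K a).
Proof. by move=> Ha; split; [apply: gen_mono|]; rewrite /wordX /= Ha. Qed.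

Definition eqv f h := I (ncsub f h).

Lemma J1 x y z : wordX n x.2 ->
  (sbr (sbr x y) z).1 = ncadd (sbr x (sbr y z)).1
     (ncsub (ncscale (pw y.2 z.2) (ncmul (sbr x z).1 y.1))
            (ncscale (pw x.2 y.2) (ncmul y.1 (sbr x z).1))).
Proof. move=> Hx; rewrite /= !pw_catl !pw_catr //. nc_norm. Qed.

Lemma I_opp f : I f -> I (ncscale (-1) f).
Proof. exact: I_scale. Qed.

Lemma eqv_refl f : eqv f f.
Proof. by apply: I_zero => w; rewrite /ncsub /ncadd /ncscale; ring. Qed.
Lemma eqv_sym f h : eqv f h -> eqv h f.
Proof.
move=> H; apply: (I_ext (f := ncscale (-1) (ncsub f h))); last exact: I_scale.
by move=> w; rewrite /ncsub /ncadd /ncscale; ring.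
Qed.
Lemma eqv_trans h f k : eqv f h -> eqv h k -> eqv f k.
Proof.
move=> H1 H2; apply: (I_ext (f := ncadd (ncsub f h) (ncsub h k))); last exact: I_add.
by move=> w; rewrite /ncsub /ncadd /ncscale; ring.
Qed.
Lemma I_eqv f h : eqv f h -> I h -> I f.
Proof.
move=> H1 H2; apply: (I_ext (f := ncadd (ncsub f h) h)); last exact: I_add.
by move=> w; rewrite /ncsub /ncadd /ncscale; ring.
Qed.
Lemma eqv_I f h : I f -> I h -> eqv f h.
Proof. exact: I_sub. Qed.
Lemma eqv_eq f h : f = h -> eqv f h.
Proof. by move=> ->; apply: eqv_refl. Qed.

Lemma Br_I_r x r : gen x.1 -> I r.1 -> I (sbr x r).1.
Proof.
move=> Hx Hr; apply: I_sub; last apply: I_scale.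
  exact: I_mulgl. exact: I_mulgr.
Qed.
Lemma Br_I_l r x : gen x.1 -> I r.1 -> I (sbr r x).1.
Proof.
move=> Hx Hr; apply: I_sub; last apply: I_scale.
  exact: I_mulgr. exact: I_mulgl.
Qed.

Lemma J2 x y z : wordX n x.2 ->
  (sbr x (sbr y z)).1 = ncsub (sbr (sbr x y) z).1
     (ncsub (ncscale (pw y.2 z.2) (ncmul (sbr x z).1 y.1))
            (ncscale (pw x.2 y.2) (ncmul y.1 (sbr x z).1))).
Proof. move=> Hx; rewrite /= !pw_catl !pw_catr //. nc_norm. Qed.

Lemma comm_br x y z : Good x -> Good y -> Good z ->
  I (sbr x z).1 -> I (sbr y z).1 -> I (sbr (sbr x y) z).1.
Proof.
move=> [Gx Wx] [Gy Wy] [Gz Wz] H1 H2; rewrite J1 //.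
apply: I_add; first by apply: Br_I_r.
apply: I_sub; apply: I_scale; [exact: I_mulgr | exact: I_mulgl].
Qed.

Lemma comm_br_r x y z : Good x -> Good y -> Good z ->
  I (sbr x y).1 -> I (sbr x z).1 -> I (sbr x (sbr y z)).1.
Proof.
move=> [Gx Wx] [Gy Wy] [Gz Wz] H1 H2; rewrite J2 //.
apply: I_sub; first by apply: Br_I_l.
apply: I_sub; apply: I_scale; [exact: I_mulgr | exact: I_mulgl].
Qed.

Lemma assoc_br x y z : Good x -> Good y -> Good z ->
  I (sbr x z).1 -> eqv (sbr (sbr x y) z).1 (sbr x (sbr y z)).1.
Proof.
move=> [Gx Wx] [Gy Wy] [Gz Wz] H1; rewrite J1 //.
apply: (I_ext (f := (ncsub (ncscale (pw y.2 z.2) (ncmul (sbr x z).1 y.1))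
            (ncscale (pw x.2 y.2) (ncmul y.1 (sbr x z).1))))).
  by move=> w; rewrite /ncsub /ncadd /ncscale; ring.
apply: I_sub; apply: I_scale; [exact: I_mulgr | exact: I_mulgl].
Qed.

Lemma cong_l x x' y : gen y.1 -> x.2 = x'.2 -> eqv x.1 x'.1 -> eqv (sbr x y).1 (sbr x' y).1.
Proof.
move=> Gy E H; have -> : (sbr x y).1 = ncsub (ncmul x.1 y.1) (ncscale (pw x'.2 y.2) (ncmul y.1 x.1)).
  by rewrite /= E.
rewrite /eqv.
have -> : ncsub (ncsub (ncmul x.1 y.1) (ncscale (pw x'.2 y.2) (ncmul y.1 x.1))) (sbr x' y).1 =
   ncsub (ncmul (ncsub x.1 x'.1) y.1) (ncscale (pw x'.2 y.2) (ncmul y.1 (ncsub x.1 x'.1))).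
  nc_norm.
apply: I_sub; [exact: I_mulgr | apply: I_scale; exact: I_mulgl].
Qed.

Lemma cong_r x y y' : gen x.1 -> y.2 = y'.2 -> eqv y.1 y'.1 -> eqv (sbr x y).1 (sbr x y').1.
Proof.
move=> Gx E H; have -> : (sbr x y).1 = ncsub (ncmul x.1 y.1) (ncscale (pw x.2 y'.2) (ncmul y.1 x.1)).
  by rewrite /= E.
rewrite /eqv.
have -> : ncsub (ncsub (ncmul x.1 y.1) (ncscale (pw x.2 y'.2) (ncmul y.1 x.1))) (sbr x y').1 =
   ncsub (ncmul x.1 (ncsub y.1 y'.1)) (ncscale (pw x.2 y'.2) (ncmul (ncsub y.1 y'.1) x.1)).
  nc_norm.
apply: I_sub; [exact: I_mulgl | apply: I_scale; exact: I_mulgr].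
Qed.
End L4.


Section L5.
Variables (K : fieldType) (G : zmodType) (g : nat -> G) (chi : nat -> G -> K) (n : nat).
Hypothesis Hchi : forall i, (1 <= i <= n)%N -> forall a b : G, chi i (a + b) = chi i a * chi i b.
Notation sbr := (sbr g chi).
Notation I := (I g chi n).
Notation Good := (Good n).
Notation eqv := (eqv g chi n).
Variable s : seq (hitem K).
Notation d := (nc0 K, [::] : word).
Notation S i := (nth d s i).
Hypothesis HG : forall i, (i < size s)%N -> Good (S i).
Hypothesis HC : forall i j, (i.+1 < j < size s)%N -> I (sbr (S i) (S j)).1.

Fixpoint LB a i := match i with 0 => S a | i'.+1 => sbr (LB a i') (S (a + i)) end.

Lemma Good_LB a i : (a + i < size s)%N -> Good (LB a i).
Proof.
elim: i => [|i IH] H /=; first by apply: HG; rewrite addn0 in H.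
apply: Good_sbr; [apply: IH; apply: ltnW; rewrite addnS in H| apply: HG] => //.
Qed.

Lemma LB_comm a i c : ((a + i).+1 < c)%N -> (c < size s)%N -> I (sbr (LB a i) (S c)).1.
Proof.
elim: i => [|i IH] H1 H2 /=; first by apply: HC; rewrite addn0 in H1; rewrite H1 H2.
have Hc : (a + i.+1 < size s)%N by apply: ltn_trans H2; apply: ltn_trans H1.
apply: (comm_br Hchi) => //; try apply: HG; try apply: Good_LB => //.
- by apply: ltnW; rewrite addnS in Hc.
- by [].
- by [].
- by apply: IH => //; rewrite addnS in H1; apply: ltn_trans H1.
- apply: HC; apply/andP; split; last exact: H2. by move: H1; rewrite addnS.
Qed.

Lemma LBS a k : LB a k.+1 = sbr (LB a k) (S (a + k.+1)).
Proof. by []. Qed.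

Lemma sbr2 x y : (sbr x y).2 = x.2 ++ y.2.
Proof. by []. Qed.

Lemma LB_join a i j : (a + i.+1 + j < size s)%N ->
  (sbr (LB a i) (LB (a + i.+1) j)).2 = (LB a (i.+1 + j)).2 /\
  eqv (sbr (LB a i) (LB (a + i.+1) j)).1 (LB a (i.+1 + j)).1.
Proof.
elim: j => [|j IH] H.
  by rewrite !addn0; split => //; apply: eqv_refl.
have H' : (a + i.+1 + j < size s)%N by apply: ltnW; rewrite addnS in H.
have [IH1 IH2] := IH H'.
have E : (a + i.+1 + j.+1)%N = (a + (i.+1 + j).+1)%N by rewrite !addnS addnA.
have E2 : (a + i.+1 + j.+1)%N = (a + i.+1 + j).+1 by rewrite addnS.
have E3 : LB a (i.+1 + j.+1) = sbr (LB a (i.+1 + j)) (S (a + i.+1 + j.+1)).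
  by rewrite addnS LBS -E.
rewrite [LB (a + i.+1) j.+1]LBS E3.
split.
  set W := LB a (i.+1 + j) in IH1 *; set Y := LB (a + i.+1) j in IH1 *; set X := LB a i in IH1 *. by rewrite (sbr2 X) (sbr2 Y) (sbr2 W) -IH1 sbr2 catA.
apply: (eqv_trans (h := (sbr (sbr (LB a i) (LB (a + i.+1) j)) (S (a + i.+1 + j.+1))).1)).
  apply: eqv_sym; apply: (assoc_br Hchi).
  - by apply: Good_LB; lia.
  - by apply: Good_LB; lia.
  - by apply: HG.
  - apply: LB_comm => //; lia.
apply: cong_l => //.
by case: (HG H).
Qed.

Lemma frontier_ne t : (0 < size (frontier t))%N.
Proof. by elim: t => //= l IHl r IHr; rewrite size_cat addn_gt0 IHl. Qed.

Lemma Good_beval t : all (fun i => (i < size s)%N) (frontier t) -> Good (beval g chi s t).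
Proof.
elim: t => [i|l IHl r IHr] /=; first by rewrite andbT; apply: HG.
by rewrite all_cat => /andP [H1 H2]; apply: Good_sbr; [apply: IHl | apply: IHr].
Qed.

Lemma all_iota a i : (a + i < size s)%N -> all (fun k => (k < size s)%N) (iota a i.+1).
Proof. move=> H; apply/allP => k; rewrite mem_iota => /andP [H1 H2]; lia. Qed.

Lemma tree_LB t : forall a i, frontier t = iota a i.+1 -> (a + i < size s)%N ->
  (beval g chi s t).2 = (LB a i).2 /\ eqv (beval g chi s t).1 (LB a i).1.
Proof.
elim: t => [j|l IHl r IHr] a i /=.
  case: i => [|i] /=; last by case=> _; case: i.
  by case=> ->; rewrite addn0 => _; split => //; apply: eqv_refl.
move=> E H; change (frontier l ++ frontier r = iota a i.+1) in E.
have Hl := frontier_ne l; have Hr := frontier_ne r.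
have Hsz : (size (frontier l) + size (frontier r))%N = i.+1 by move: (congr1 size E); rewrite size_cat size_iota.
have El : frontier l = iota a (size (frontier l)).
  have := congr1 (take (size (frontier l))) E; rewrite take_size_cat // take_iota => ->.
  by rewrite size_iota.
have Er : frontier r = iota (a + size (frontier l)) (i.+1 - size (frontier l)).
  by have := congr1 (drop (size (frontier l))) E; rewrite drop_size_cat // drop_iota.
set p := (size (frontier l)).-1 in El Er.
have Ep : size (frontier l) = p.+1 by rewrite /p; lia.
set q := (i - p.+1)%N.
have Eq : (i.+1 - size (frontier l))%N = q.+1 by rewrite Ep /q; lia.
have Ei : i = (p.+1 + q)%N by rewrite /q; lia.
rewrite Eq in Er; rewrite Ep in El Er.
have [Dl Ql] := IHl a p El ltac:(lia).
have [Dr Qr] := IHr (a + p.+1) q Er ltac:(lia).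
have [Dj Qj] := LB_join (a := a) (i := p) (j := q) ltac:(lia).
have Gr : Good (beval g chi s r) by apply: Good_beval; rewrite Er; apply: all_iota; lia.
have Gp : Good (LB a p) by apply: Good_LB; lia.
rewrite Ei; split.
  by rewrite sbr2 Dl Dr -sbr2 Dj.
apply: (eqv_trans (h := (sbr (LB a p) (beval g chi s r)).1)).
  by apply: cong_l => //; case: Gr.
apply: eqv_trans Qj.
by apply: cong_r => //; case: Gp.
Qed.
End L5.


Ltac nc_normF :=
  rewrite /sbr /= /ncsub ?(ncmulDlF, ncmulDrF, ncmulZlF, ncmulZrF, ncmulA);
  apply: functional_extensionality => ?; rewrite /ncadd /ncscale; field.

Section L6.
Variables (K : fieldType) (G : zmodType) (g : nat -> G) (chi : nat -> G -> K) (n : nat).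
Hypothesis Hchi : forall i, (1 <= i <= n)%N -> forall a b : G, chi i (a + b) = chi i a * chi i b.
Notation sbr := (sbr g chi).
Notation pw := (pw g chi).
Notation I := (I g chi n).
Notation Good := (Good n).
Notation eqv := (eqv g chi n).

Lemma certL (u a b : hitem K) q : wordX n u.2 -> wordX n a.2 -> q != 0 ->
  pw a.2 a.2 = q -> pw a.2 b.2 != 0 -> pw b.2 a.2 = q^-1 / pw a.2 b.2 ->
  let pUA := pw u.2 a.2 in let pUB := pw u.2 b.2 in let pAB := pw a.2 b.2 in
  let R3 := (sbr u b).1 in let R2 := (sbr (sbr u a) a).1 in let R1 := (sbr a (sbr a b)).1 in
  let E1 := ncsub (ncscale pAB (ncmul R3 a.1)) (ncscale pUA (ncmul a.1 R3)) in
  ncscale (1 + q) (sbr (sbr u (sbr a b)) a).1 =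
  ncadd (ncadd (ncscale (-1) (ncmul E1 a.1)) (ncscale (pAB^-1 * pUA * q) (ncmul a.1 E1)))
        (ncadd (ncscale pAB^-1 (ncsub (ncmul R2 b.1) (ncscale (pUB * pAB * pAB) (ncmul b.1 R2))))
               (ncscale (- pAB^-1) (ncsub (ncmul u.1 R1) (ncscale (pUA * pUA * pUB) (ncmul R1 u.1))))).
Proof.
move=> Hu Ha Hq Haa Hab Hba pUA pUB pAB R3 R2 R1 E1.
rewrite /E1 /R1 /R2 /R3 /pUA /pUB /pAB /= !pw_catl !(@pw_catr K G g chi n Hchi) // ?pw_catl Haa Hba.
nc_normF. by rewrite Hab Hq.
Qed.

Lemma LemL (u a b : hitem K) q : Good u -> Good a -> Good b -> q != 0 -> 1 + q != 0 ->
  pw a.2 a.2 = q -> pw a.2 b.2 != 0 -> pw b.2 a.2 = q^-1 / pw a.2 b.2 ->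
  I (sbr u b).1 -> I (sbr (sbr u a) a).1 -> I (sbr a (sbr a b)).1 ->
  I (sbr (sbr (sbr u a) b) a).1.
Proof.
move=> Gu Ga Gb Hq Hq1 Haa Hab Hba R3 R2 R1.
have [gu wu] := Gu; have [ga wa] := Ga; have [gb wb] := Gb.
apply: (I_eqv (h := (sbr (sbr u (sbr a b)) a).1)).
  apply: cong_l => //; first by rewrite /= catA.
  by apply: (assoc_br Hchi).
have C := certL wu wa Hq Haa Hab Hba.
apply: (I_ext (f := ncscale (1 + q)^-1 (ncscale (1 + q) (sbr (sbr u (sbr a b)) a).1))).
  by move=> w; rewrite /ncscale mulrA mulVf // mul1r.
apply: I_scale; rewrite C.
have HE1 : I (ncsub (ncscale (pw a.2 b.2) (ncmul (sbr u b).1 a.1))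
               (ncscale (pw u.2 a.2) (ncmul a.1 (sbr u b).1))).
  by apply: I_sub; apply: I_scale; [apply: I_mulgr | apply: I_mulgl].
apply: I_add; apply: I_add.
- by apply: I_scale; apply: I_mulgr.
- by apply: I_scale; apply: I_mulgl.
- by apply: I_scale; apply: I_sub; [apply: I_mulgr | apply: I_scale; apply: I_mulgl].
- by apply: I_scale; apply: I_sub; [apply: I_mulgl | apply: I_scale; apply: I_mulgr].
Qed.
End L6.


Section L7.
Variables (K : fieldType) (G : zmodType) (g : nat -> G) (chi : nat -> G -> K) (q : K) (n k : nat).
Hypothesis Hn : (3 <= n)%N.
Hypothesis Hchi : forall i, (1 <= i <= n)%N -> forall a b : G, chi i (a + b) = chi i a * chi i b.
Hypothesis Hnz : forall i, (1 <= i <= n)%N -> forall a : G, chi i a != 0.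
Hypothesis Hq0 : q != 0.
Hypothesis Hq1 : q != -1.
Hypothesis Hii : forall i, (1 <= i <= n)%N -> chi i (g i) = q.
Hypothesis Hadj : forall i, (1 < i < n)%N -> chi i (g i.-1) * chi i.-1 (g i) = q^-1.
Hypothesis HD : chi (n - 2)%N (g n) * chi n (g (n - 2)%N) = q^-1.
Hypothesis Hfar : forall i j, (1 <= i)%N -> (i.+1 < j <= n)%N -> (i, j) <> ((n - 2)%N, n) ->
     chi i (g j) * chi j (g i) = 1.
Hypothesis Hk1 : (1 <= k)%N.

Notation sbr := (sbr g chi).
Notation pw := (pw g chi).
Notation I := (I g chi n).
Notation Good := (Good n).
Notation eqv := (eqv g chi n).
Notation X := (xitem K).

Lemma pwX i j : pw [:: i] [:: j] = chi i (g j).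
Proof. by rewrite /pw big_seq1 big_seq1. Qed.

Lemma GX a : (1 <= a <= n)%N -> Good (X a).
Proof. exact: Good_x. Qed.

Lemma Rs1 i : (1 <= i <= n - 2)%N -> I (sbr (X i) (sbr (X i) (X i.+1))).1.
Proof. by move=> H; apply: I_rel; left; exists i; split => //; left. Qed.
Lemma Rs2 i : (1 <= i <= n - 2)%N -> I (sbr (sbr (X i) (X i.+1)) (X i.+1)).1.
Proof. by move=> H; apply: I_rel; left; exists i; split => //; right. Qed.
Lemma RD1 : I (sbr (X (n - 2)) (sbr (X (n - 2)) (X n))).1.
Proof. by apply: I_rel; right; left. Qed.
Lemma Rc i j : (1 <= i)%N -> (i.+1 < j <= n - 1)%N -> I (sbr (X i) (X j)).1.
Proof.
move=> H1 H2; apply: I_rel; right; right; right; left; exists i, j; split => //.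
split; [lia | split; [lia | by []]].
Qed.
Lemma Rcn i : (1 <= i <= n - 3)%N -> I (sbr (X i) (X n)).1.
Proof. by move=> H; apply: I_rel; right; right; right; right; left; exists i. Qed.

Lemma rev_id (x y : hitem K) :
  ncadd (sbr y x).1 (ncscale (pw y.2 x.2) (sbr x y).1) =
  ncscale (1 - pw x.2 y.2 * pw y.2 x.2) (ncmul y.1 x.1).
Proof. nc_norm. Qed.

Lemma I_rev (x y : hitem K) : pw x.2 y.2 * pw y.2 x.2 = 1 -> I (sbr x y).1 -> I (sbr y x).1.
Proof.
move=> E H.
apply: (I_ext (f := ncsub (ncadd (sbr y x).1 (ncscale (pw y.2 x.2) (sbr x y).1))
                           (ncscale (pw y.2 x.2) (sbr x y).1))).
  by move=> w; rewrite /ncsub /ncadd /ncscale; ring.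
rewrite rev_id E subrr; apply: I_sub; last by apply: I_scale.
by apply: I_zero => w; rewrite /ncscale mul0r.
Qed.

Lemma Rc' i j : (1 <= i)%N -> (i.+1 < j <= n - 1)%N -> I (sbr (X j) (X i)).1.
Proof.
move=> H1 H2; apply: I_rev; last exact: Rc.
rewrite /= !pwX; apply: Hfar => //; first lia.
move=> [E1 E2]; lia.
Qed.
Lemma Rcn' i : (1 <= i <= n - 3)%N -> I (sbr (X n) (X i)).1.
Proof.
move=> H1; apply: I_rev; last exact: Rcn.
rewrite /= !pwX; apply: Hfar; [lia | lia | move=> [E]; lia].
Qed.

Fixpoint EF i := match i with 0 => X k | i'.+1 => sbr (EF i') (X (k + i)) end.
Lemma EFS i : EF i.+1 = sbr (EF i) (X (k + i.+1)).
Proof. by []. Qed.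

Lemma Good_EF i : (k + i <= n)%N -> Good (EF i).
Proof.
elim: i => [|i IH] H; first by apply: GX; lia.
rewrite EFS; apply: Good_sbr; [apply: IH; lia | apply: GX; lia].
Qed.

Lemma LemB i b : (k + i.+2 <= b)%N -> (b <= n)%N -> (b = n -> k + i <= n - 3)%N ->
  I (sbr (EF i) (X b)).1.
Proof.
elim: i => [|i IH] H1 H2 H3.
  case: (b =P n) => [Eb|Nb].
    by rewrite Eb; apply: Rcn; have := H3 Eb; lia.
  by apply: Rc => //; lia.
rewrite EFS; apply: (comm_br Hchi).
- by apply: Good_EF; lia.
- by apply: GX; lia.
- by apply: GX; lia.
- by apply: IH => //; [lia | move=> E; have := H3 E; lia].
- case: (b =P n) => [Eb|Nb].
    by rewrite Eb; apply: Rcn; have := H3 Eb; lia.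
  by apply: Rc => //; lia.
Qed.

Lemma LemC i : (k + i.+1 <= n - 2)%N -> I (sbr (EF i.+1) (X (k + i.+1))).1.
Proof.
case: i => [|i] H.
  by rewrite EFS addn1; apply: Rs2; lia.
set c := (k + i.+2)%N.
have Hc : (k + i.+1).+1 = c by rewrite /c; lia.
have Gv : Good (EF i) by apply: Good_EF; lia.
have Gc : Good (X c) by apply: GX; lia.
have Gc1 : Good (X (k + i.+1)) by apply: GX; lia.
have Hvc : I (sbr (EF i) (X c)).1 by apply: LemB; rewrite /c; lia.
rewrite EFS -/c EFS.
apply: (I_eqv (h := (sbr (sbr (EF i) (sbr (X (k + i.+1)) (X c))) (X c)).1)).
  apply: cong_l => //; first by case: Gc.
    by rewrite /= -catA.
  by apply: (assoc_br Hchi).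
apply: (I_eqv (h := (sbr (EF i) (sbr (sbr (X (k + i.+1)) (X c)) (X c))).1)).
  apply: (assoc_br Hchi) => //; by apply: Good_sbr.
apply: Br_I_r; first by case: Gv.
by rewrite -Hc; apply: Rs2; lia.
Qed.

Lemma q1 : 1 + q != 0.
Proof. by apply: contra Hq1; rewrite addrC addr_eq0. Qed.

Lemma pw_div (a b c : K) : a != 0 -> b * a = c -> b = c / a.
Proof. by move=> Ha <-; rewrite mulfK. Qed.

Lemma LemA a' j : (k < j)%N -> (j < k + a')%N -> (k + a' <= n - 2)%N -> I (sbr (EF a') (X j)).1.
Proof.
elim: a' j => [|a IH] j H1 H2 H3; first by lia.
rewrite EFS.
case: (ltnP j (k + a)) => Hj.
  apply: (comm_br Hchi).
  - by apply: Good_EF; lia.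
  - by apply: GX; lia.
  - by apply: GX; lia.
  - by apply: IH => //; lia.
  - by apply: Rc'; lia.
have Ej : j = (k + a)%N by lia.
case: a IH H2 H3 Hj Ej => [|a] IH H2 H3 Hj Ej; first by lia.
rewrite EFS -Ej.
have Ej1 : (k + a.+2)%N = j.+1 by lia.
rewrite Ej1.
apply: (LemL Hchi (q := q)).
- by apply: Good_EF; lia.
- by apply: GX; lia.
- by apply: GX; lia.
- exact: Hq0.
- exact: q1.
- by rewrite pwX Hii //; lia.
- by rewrite pwX Hnz //; lia.
- rewrite !pwX; apply: pw_div; first by apply: Hnz; lia.
  by apply: (Hadj (i := j.+1)); lia.
- by apply: LemB; [lia|lia|move=> ?; lia].
- by rewrite Ej; apply: (LemC (i := a)); lia.
- by apply: Rs1; lia.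
Qed.

Lemma LemD j : (k < j)%N -> (j <= n - 2)%N ->
  I (sbr (sbr (EF (n - 2 - k)) (X n)) (X j)).1.
Proof.
move=> H1 H2.
case: (ltnP j (n - 2)) => Hj.
  apply: (comm_br Hchi).
  - by apply: Good_EF; lia.
  - by apply: GX; lia.
  - by apply: GX; lia.
  - by apply: LemA; lia.
  - by apply: Rcn'; lia.
have Ej : j = (n - 2)%N by lia.
have E : (n - 2 - k)%N = (n - 3 - k).+1 by lia.
have E2 : (k + (n - 3 - k).+1)%N = (n - 2)%N by lia.
rewrite E EFS E2 Ej.
apply: (LemL Hchi (q := q)).
- by apply: Good_EF; lia.
- by apply: GX; lia.
- by apply: GX; lia.
- exact: Hq0.
- exact: q1.
- by rewrite pwX Hii //; lia.
- by rewrite pwX Hnz //; lia.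
- rewrite !pwX; apply: pw_div; first by apply: Hnz; lia.
  by rewrite mulrC HD.
- by apply: LemB; lia.
- by rewrite -E2 -EFS; apply: LemC; lia.
- exact: RD1.
Qed.
End L7.


Lemma foldl_EF (K : fieldType) (G : zmodType) (g : nat -> G) (chi : nat -> G -> K) k m :
  foldl (sbr g chi) (xitem K k) (map (xitem K) (iota k.+1 m)) = EF g chi k m.
Proof.
elim: m => [|m IH] //.
have -> : iota k.+1 m.+1 = iota k.+1 m ++ [:: (k.+1 + m)%N] by rewrite -[m.+1]addn1 iotaD.
by rewrite map_cat foldl_cat IH /= addSnnS.
Qed.

Lemma e_br_EF (K : fieldType) (G : zmodType) (g : nat -> G) (chi : nat -> G -> K) k n :
  (1 <= k)%N -> (k <= n - 2)%N -> e_br g chi k n = sbr g chi (EF g chi k (n - 2 - k)) (xitem K n).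
Proof.
move=> H0 H; rewrite /e_br /e_word.
have -> : (n.-1 - k)%N = (n - 2 - k).+1 by rewrite -subn1; lia.
by rewrite /= map_rcons /= foldl_rcons foldl_EF.
Qed.

Theorem lemma6p4 (K : fieldType) (G : zmodType) (g : nat -> G)
    (chi : nat -> G -> K) (q : K) (n k m : nat) :
  (3 <= n)%N ->
  (forall i, (1 <= i <= n)%N -> forall a b : G, chi i (a + b) = chi i a * chi i b) ->
  (forall i, (1 <= i <= n)%N -> forall a : G, chi i a != 0) ->
  q != 0 -> q != -1 ->
  let p i j := chi i (g j) in
  (forall i, (1 <= i <= n)%N -> p i i = q) ->
  (forall i, (1 < i < n)%N -> p i i.-1 * p i.-1 i = q^-1) ->
  p (n - 2)%N n * p n (n - 2)%N = q^-1 ->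
  p (n - 1)%N n * p n (n - 1)%N = 1 ->
  (forall i j, (1 <= i)%N -> (i.+1 < j <= n)%N -> (i, j) <> ((n - 2)%N, n) ->
     p i j * p j i = 1) ->
  (1 <= k)%N -> (k < n)%N -> (n < m)%N -> (m < n.*2 - k)%N ->
  let s := e_br g chi k n
           :: map (fun j => xitem K (xlet n j)) (iota n.+1 (m - n)) in
  forall t1 t2 : btree,
    frontier t1 = iota 0 (size s) -> frontier t2 = iota 0 (size s) ->
    eq_Uq g chi n (beval g chi s t1).1 (beval g chi s t2).1.
Proof.
move=> Hn Hchi Hnz Hq0 Hq1 p Hii Hadj HD _ Hfar Hk1 Hkn Hnm Hmk s t1 t2 F1 F2.
have Hk2 : (k <= n - 2)%N by lia.
have Hsz : size s = (m - n).+1 by rewrite /s /= size_map size_iota.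
have Hs0 : nth (nc0 K, [::] : word) s 0 = sbr g chi (EF g chi k (n - 2 - k)) (xitem K n).
  by rewrite /s /= e_br_EF.
have HsS : forall i, (i < m - n)%N -> nth (nc0 K, [::] : word) s i.+1 = xitem K (n - i.+1).
  move=> i Hi; rewrite /s /= (nth_map 0%N); last by rewrite size_iota.
  rewrite nth_iota // /xlet; case: ifP => H; first lia.
  by congr xitem; rewrite -addnn; lia.
have HG : forall i, (i < size s)%N -> Good n (nth (nc0 K, [::] : word) s i).
  move=> [|i] Hi.
    rewrite Hs0; apply: Good_sbr; first by apply: (Good_EF g chi Hn Hq0 Hq1 Hk1); lia.
    by apply: GX; lia.
  by rewrite HsS; [apply: GX; lia | lia].
have HC : forall i j, (i.+1 < j < size s)%N ->
    I g chi n (sbr g chi (nth (nc0 K, [::] : word) s i) (nth (nc0 K, [::] : word) s j)).1.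
  move=> i [|j] Hij; first lia.
  rewrite HsS; last lia.
  case: i Hij => [|i] Hij.
    rewrite Hs0; apply: (LemD Hn Hchi Hnz Hq0 Hq1 Hii Hadj HD Hfar Hk1); lia.
  rewrite HsS; last lia.
  by apply: (Rc' Hn Hq0 Hq1 Hfar Hk1); lia.
have E : forall t, frontier t = iota 0 (size s) ->
    frontier t = iota 0 (m - n).+1 by move=> t; rewrite Hsz.
have [_ T1] := tree_LB Hchi HG HC (E _ F1) ltac:(lia).
have [_ T2] := tree_LB Hchi HG HC (E _ F2) ltac:(lia).
exact: (eqv_trans T1 (eqv_sym T2)).
Qed.
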